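(* Let $X$ be a real linear space, $T$ an infinite index set, and $f, f_t : X \to \overline{\mathbb{R}} := \mathbb{R}\cup\{\pm\infty\}$ ($t \in T$) convex proper functions. Let $M := \bigcap_{t\in T} \operatorname{dom} f_t$. Let $v:\mathbb{R}^T\to\overline{\mathbb{R}}$ be $v(y) := \inf\{f(x) : f_t(x)\le y_t \text{ for all } t\in T\}$, where $\mathbb{R}^T$ carries the product topology, and let $\overline{v}$ denote the lower semicontinuous hull of $v$, so that $\overline{v}(0_Y) = \sup_{V} \inf_{y\in V} v(y)$, the supremum being over all neighborhoods $V$ of the origin $0_Y$ of $\mathbb{R}^T$. Let $$\sup(D) := \sup_{\lambda\in\mathbb{R}_+^{(T)}} \inf_{x\in M}\Big(f(x)+\sum_{t\in T}\lambda_t f_t(x)\Big).$$ Assume that either $\overline{v}(0_Y)\neq+\infty$ or $\sup(D)\neq-\infty$. Then $$\sup(D) = \sup_{\varepsilon>0,\ H\in\mathcal{F}(T)} \ \inf_{x\in M}\{ f(x) : f_t(x)\le\varepsilon \text{ for all } t\in H\}.$$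
   Context: $\operatorname{dom} g := \{x : g(x)<+\infty\}$; a proper function never takes the value $-\infty$ and has nonempty domain. $\mathbb{R}^{(T)}$ is the space of functions $\lambda=(\lambda_t)_{t\in T}:T\to\mathbb{R}$ with finite support $\operatorname{supp}\lambda=\{t:\lambda_t\neq0\}$, and $\mathbb{R}^{(T)}_+$ its elements with all $\lambda_t\ge0$; $\sum_{t\in T}\lambda_t f_t(x)$ means $\sum_{t\in\operatorname{supp}\lambda}\lambda_t f_t(x)$ if $\lambda\ne 0$ and $0$ if $\lambda=0$. $\mathcal{F}(T)$ is the family of nonempty finite subsets of $T$. Conventions: $\inf\emptyset=+\infty$, $\sup\emptyset=-\infty$. *)

(* Defs.v *)
From HB Require Import structures.
From mathcomp Require Import all_boot all_order all_algebra.
From mathcomp Require Import all_classical all_reals all_analysis.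
Set Implicit Arguments. Unset Strict Implicit. Unset Printing Implicit Defensive.
Import Order.TTheory GRing.Theory Num.Theory numFieldNormedType.Exports.
Local Open Scope classical_set_scope.
Local Open Scope ring_scope.
Local Open Scope ereal_scope.

Definition edom (R : realType) (X : Type) (g : X -> \bar R) : set X :=
  [set x | g x < +oo].

Definition eproper (R : realType) (X : Type) (g : X -> \bar R) : Prop :=
  (forall x, g x != -oo) /\ (exists x, g x < +oo).

Definition econvex (R : realType) (X : lmodType R) (g : X -> \bar R) : Prop :=
  forall (x y : X) (l : R), (0 < l)%R -> (l < 1)%R ->
    g (l *: x + (1 - l) *: y)%R <= l%:E * g x + (1 - l)%:E * g y.

Definition valfun (R : realType) (X : Type) (T : choiceType)
  (f : X -> \bar R) (ft : T -> X -> \bar R) (y : T -> R) : \bar R :=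
  ereal_inf [set f x | x in [set x | forall t, ft t x <= (y t)%:E]].

Definition vbar0 (R : realType) (X : Type) (T : choiceType)
  (f : X -> \bar R) (ft : T -> X -> \bar R) : \bar R :=
  ereal_sup [set ereal_inf (@valfun R X T f ft @` V) |
               V in nbhs ((fun _ : T => 0%R) : {ptws T -> R})].

Definition fin_supp_nonneg (R : realType) (T : choiceType) : set (T -> R) :=
  [set l | finite_set [set t | l t != 0%R] /\ forall t, (0 <= l t)%R].

Definition Mdom (R : realType) (X : Type) (T : choiceType)
  (ft : T -> X -> \bar R) : set X := \bigcap_(t in [set: T]) edom (ft t).

Definition supD (R : realType) (X : Type) (T : choiceType)
  (f : X -> \bar R) (ft : T -> X -> \bar R) : \bar R :=
  ereal_sup [set ereal_inf [set f x + \sum_(t \in [set t | l t != 0%R]) (l t)%:E * ft t x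
                            | x in Mdom ft]
            | l in @fin_supp_nonneg R T].

Definition supFinPert (R : realType) (X : Type) (T : choiceType)
  (f : X -> \bar R) (ft : T -> X -> \bar R) : \bar R :=
  ereal_sup [set z | exists (eps : R) (H : set T),
    [/\ (0 < eps)%R, finite_set H, H !=set0 &
        z = ereal_inf [set f x | x in [set x | Mdom ft x /\
                                     (forall t, H t -> ft t x <= eps%:E)]]]].

(* Main.v *)
Require Import Defs.
From HB Require Import structures.
From mathcomp Require Import all_boot all_order all_algebra.
From mathcomp Require Import all_classical all_reals all_analysis.
From mathcomp Require Import lra finmap.
Import Order.TTheory GRing.Theory Num.Theory numFieldNormedType.Exports.
Local Open Scope classical_set_scope.
Local Open Scope ring_scope.
Local Open Scope ereal_scope.

Local Close Scope ereal_scope.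

Section HB.
Variable R : realType.
Variable I : eqType.
Variable p : (I -> R) -> R.
Hypothesis psub : forall a b, p (fun i => a i + b i) <= p a + p b.
Hypothesis phom : forall (s : R) a, 0 < s -> s * p a <= p (fun i => s * a i).

Definition suppm (hs : seq I) (a : I -> R) := forall i, i \notin hs -> a i = 0.

Lemma p0_ge0 : 0 <= p (fun _ => 0).
Proof.
have := psub (fun _ => 0) (fun _ => 0).
have -> : (fun _ : I => (0:R) + 0) = (fun _ => 0) by apply: funext => i; rewrite addr0.
lra.
Qed.

Lemma hb_ext hs : uniq hs -> exists c : I -> R, forall a, suppm hs a ->
  \sum_(i <- hs) a i * c i <= p a.
Proof.
elim: hs => [|j hs IH] /=.
  move=> _; exists (fun _ => 0) => a Ha; rewrite big_nil.
  have -> : a = (fun _ => 0) by apply: funext => i; exact: Ha.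
  exact: p0_ge0.
move=> /andP[jhs uhs]; have [c Hc] := IH uhs.
pose em := fun i : I => ((i == j)%:R : R).
pose L := fun b : I -> R => \sum_(i <- hs) b i * c i.
pose A := [set p (fun i => b i + em i) - L b | b in suppm hs].
have lbA : forall b', suppm hs b' -> lbound A (L b' - p (fun i => b' i - em i)).
  move=> b' Hb' _ [b Hb <-].
  have h1 : \sum_(i <- hs) (b' i + b i) * c i <= p (fun i => b' i + b i).
    by apply: Hc => i Hi; rewrite Hb' // Hb // addr0.
  have h2 := psub (fun i => b' i - em i) (fun i => b i + em i).
  have eL : \sum_(i <- hs) (b' i + b i) * c i = L b' + L b.
    by rewrite /L -big_split /=; apply: eq_bigr => i _; rewrite mulrDl.
  rewrite eL in h1.
  have e2 : (fun i => (b' i - em i) + (b i + em i)) = (fun i => b' i + b i).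
    by apply: funext => i; rewrite addrACA addNr addr0.
  rewrite e2 in h2.
  lra.
have A0 : A !=set0.
  by exists (p (fun i => 0 + em i) - L (fun _ => 0)); exists (fun _ => 0).
have hasl : has_lbound A.
  exists (L (fun _ => 0) - p (fun i => 0 - em i)); apply: lbA => i _ //.
pose cm := inf A.
exists (fun i => if i == j then cm else c i) => a Ha.
rewrite big_cons eqxx.
have -> : \sum_(i <- hs) a i * (if i == j then cm else c i) = L a.
  rewrite /L big_seq [RHS]big_seq; apply: eq_bigr => i ihs.
  by rewrite ifF //; apply/negbTE; apply: contraNneq jhs => <-.
pose a' := fun i => if i \in hs then a i else 0.
have Ha' : suppm hs a' by move=> i Hi; rewrite /a' (negbTE Hi).
have eLa : L a = L a'.
  by rewrite /L big_seq [RHS]big_seq; apply: eq_bigr => i ih; rewrite /a' ih.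
rewrite eLa.
have Lsc : forall (s : R), s != 0 -> s * L (fun i => a' i / s) = L a'.
  move=> s s0; rewrite /L mulr_sumr; apply: eq_bigr => i _.
  by rewrite mulrA mulrCA mulfV // mulr1.
have ea : forall i, a i = a' i + a j * em i.
  move=> i; rewrite /a' /em; case: (boolP (i \in hs)) => ih.
  - have -> : (i == j) = false by apply/negbTE; apply: contraNneq jhs => <-.
    by rewrite mulr0 addr0.
  - case: (eqVneq i j) => [->|ij]; first by rewrite mulr1 add0r.
    rewrite mulr0 addr0 Ha // inE negb_or ij ih //.
rewrite mulrC.
case: (ltgtP (a j) 0) => [am|am|am].
-
  set s := - a j.
  have s0 : 0 < s by rewrite /s oppr_gt0.
  pose b := fun i => a' i / s.
  have Hb : suppm hs b by move=> i Hi; rewrite /b Ha' // mul0r.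
  have h1 : L b - p (fun i => b i - em i) <= cm.
    exact: (lb_le_inf A0 (lbA b Hb)).
  have h2 := @phom s (fun i => b i - em i) s0.
  have e3 : (fun i => s * (b i - em i)) = a.
    apply: funext => i; rewrite ea mulrBr /b mulrCA mulfV ?gt_eqF // mulr1 /s.
    by rewrite mulNr opprK.
  rewrite e3 in h2.
  have h3 := Lsc s (lt0r_neq0 s0).
  rewrite -/b in h3.
  have : s * (L b - p (fun i => b i - em i)) <= s * cm by rewrite ler_pM2l.
  rewrite mulrBr h3 => h4.
  have es : a j = - s by rewrite /s opprK.
  rewrite es; lra.
-
  set s := a j.
  pose b := fun i => a' i / s.
  have Hb : suppm hs b by move=> i Hi; rewrite /b Ha' // mul0r.
  have h1 : cm <= p (fun i => b i + em i) - L b.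
    have bA : A (p (fun i => b i + em i) - L b) by exists b.
    exact: (ge_inf hasl bA).
  have h2 := @phom s (fun i => b i + em i) am.
  have e3 : (fun i => s * (b i + em i)) = a.
    by apply: funext => i; rewrite ea mulrDr /b mulrCA mulfV ?gt_eqF // mulr1.
  rewrite e3 in h2.
  have h3 := Lsc s (lt0r_neq0 am).
  rewrite -/b in h3.
  have : s * cm <= s * (p (fun i => b i + em i) - L b) by rewrite ler_pM2l.
  rewrite mulrBr h3 => h4; lra.
-
  rewrite am mulr0 add0r.
  have -> : a = a' by apply: funext => i; rewrite ea am mul0r addr0.
  by apply: Hc.
Qed.
End HB.

Section Sep.
Variable R : realType.
Variable I : eqType.
Variable X : Type.
Variable D : set X.
Variable k : X -> I -> R.
Variable idx : seq I.
Hypothesis uidx : uniq idx.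
Hypothesis Dconv : forall x1 x2, D x1 -> D x2 -> forall th : R, 0 < th -> th < 1 ->
  exists x, D x /\ forall o, o \in idx -> k x o <= th * k x1 o + (1 - th) * k x2 o.
Variable x0 : X.
Hypothesis Dx0 : D x0.
Hypothesis Dinf : forall x, D x -> exists2 o, o \in idx & 0 < k x o.

Definition Sset (z : I -> R) := [set s : R | exists tt x, [/\ 0 < tt, D x &
  forall o, o \in idx -> tt * k x o <= s - z o]].

Lemma le_sum_abs (v : I -> R) {o} : o \in idx -> v o <= \sum_(o' <- idx) `|v o'|.
Proof.
move=> oi; rewrite (big_rem o) //=; apply: le_trans (ler_norm _) _.
by rewrite lerDl sumr_ge0.
Qed.

Lemma small (d : R) : 0 < d -> exists2 tt, 0 < tt & forall o, o \in idx -> tt * k x0 o <= d.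
Proof.
move=> d0; set N := \sum_(o' <- idx) `|k x0 o'|.
have N0 : 0 <= N by rewrite sumr_ge0.
exists (d / (1 + N)); first by rewrite divr_gt0 // ltr_pwDl.
move=> o oi; have := le_sum_abs (k x0) oi; rewrite -/N => h.
rewrite mulrC mulrA ler_pdivrMr ?ltr_pwDl //.
have h2 : k x0 o * d <= N * d by rewrite ler_pM2r.
nra.
Qed.

Lemma S_nonempty z : Sset z !=set0.
Proof.
exists (\sum_(o' <- idx) `|k x0 o' + z o'|); exists 1, x0; split => // o oi.
by rewrite mul1r lerBrDr; apply: le_trans (le_sum_abs _ oi).
Qed.

Lemma S_add {z1 z2 s1 s2} : Sset z1 s1 -> Sset z2 s2 -> Sset (fun o => z1 o + z2 o) (s1 + s2).
Proof.
move=> [t1 [x1 [t10 Dx1 H1]]] [t2 [x2 [t20 Dx2 H2]]].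
set th := t1 / (t1 + t2).
have tt0 : 0 < t1 + t2 by rewrite addr_gt0.
have th0 : 0 < th by rewrite divr_gt0.
have th1 : th < 1 by rewrite /th ltr_pdivrMr // mul1r ltrDl.
have [x [Dx Hx]] := @Dconv x1 x2 Dx1 Dx2 th th0 th1.
exists (t1 + t2), x; split => // o oi.
have e1 : (t1 + t2) * th = t1 by rewrite /th mulrCA mulfV ?mulr1 // gt_eqF.
have e2 : (t1 + t2) * (1 - th) = t2 by rewrite mulrBr mulr1 e1; lra.
have := Hx o oi; move: (H1 o oi) (H2 o oi) => h1 h2 h.
have : (t1 + t2) * k x o <= (t1 + t2) * (th * k x1 o + (1 - th) * k x2 o).
  by rewrite ler_pM2l.
have e3 : (t1 + t2) * (th * k x1 o + (1 - th) * k x2 o) = t1 * k x1 o + t2 * k x2 o.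
  by rewrite mulrDr (mulrA (t1 + t2) th) e1 (mulrA (t1 + t2) (1 - th)) e2.
rewrite e3 => h3; lra.
Qed.

Lemma S_scale {z} {a s : R} : 0 < a -> Sset (fun o => a * z o) s -> Sset z (s / a).
Proof.
move=> a0 [tt [x [tt0 Dx H]]]; exists (tt / a), x; split => //.
  by rewrite divr_gt0.
move=> o oi; have h := H o oi.
rewrite mulrAC ler_pdivrMr // mulrBl divfK ?gt_eqF //; lra.
Qed.

Lemma S0_pos s : Sset (fun _ => 0) s -> 0 < s.
Proof.
move=> [tt [x [tt0 Dx H]]]; case: (Dinf x Dx) => j ji kj.
have := H j ji; rewrite subr0 => h.
have : 0 < tt * k x j by rewrite mulr_gt0.
lra.
Qed.

Lemma S_lb z : has_lbound (Sset z).
Proof.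
have [s' Hs'] := S_nonempty (fun o => - z o).
exists (- s') => s Hs.
have := S_add Hs Hs'.
have -> : (fun o => z o + - z o) = (fun _ => 0) by apply: funext => o; rewrite subrr.
move/S0_pos; lra.
Qed.

Definition pS z := inf (Sset z).

Lemma pS_le {z s} : Sset z s -> pS z <= s.
Proof. move=> h; exact: (ge_inf (S_lb z) h). Qed.

Lemma pS_sub a b : pS (fun i => a i + b i) <= pS a + pS b.
Proof.
have h1 : forall s2, Sset b s2 -> pS (fun i => a i + b i) - s2 <= pS a.
  move=> s2 Hs2; apply: lb_le_inf (S_nonempty a) _ => s1 Hs1.
  have := pS_le (S_add Hs1 Hs2); lra.
have : pS (fun i => a i + b i) - pS a <= pS b.
  apply: lb_le_inf (S_nonempty b) _ => s2 Hs2; have := h1 s2 Hs2; lra.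
lra.
Qed.

Lemma pS_hom (s : R) a : 0 < s -> s * pS a <= pS (fun i => s * a i).
Proof.
move=> s0; apply: lb_le_inf (S_nonempty _) _ => s' Hs'.
have := pS_le (S_scale s0 Hs'); rewrite ler_pdivlMr // mulrC //.
Qed.

Lemma separation : exists c : I -> R,
  [/\ forall o, o \in idx -> 0 <= c o,
      0 < \sum_(o <- idx) c o &
      forall x, D x -> 0 <= \sum_(o <- idx) c o * k x o].
Proof.
have [c Hc] := @hb_ext R I pS pS_sub pS_hom idx uidx.
exists c; split.
- move=> o oi; rewrite leNgt; apply/negP => co.
  pose a := fun o' => if o' == o then -1 else (0:R).
  have sa : @suppm R I idx a.
    by move=> o' o'i; rewrite /a; case: eqP => // e; rewrite e oi in o'i.
  have := Hc a sa.
  have -> : \sum_(o' <- idx) a o' * c o' = - c o.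
    rewrite (big_rem o) //= /a eqxx big1_seq ?addr0 ?mulN1r // => o' /andP[_ o'r].
    case: eqP => [e|_]; last by rewrite mul0r.
    by move: o'r; rewrite e mem_rem_uniqF.
  have co2 : 0 < - c o / 2 by rewrite divr_gt0 // oppr_gt0.
  have [tt tt0 Htt] := small _ co2.
  have Sa : Sset a (- c o / 2).
    exists tt, x0; split => // o' o'i; have := Htt o' o'i.
    rewrite /a; case: eqP => _; lra.
  have := pS_le Sa; lra.
- pose a := fun o => if o \in idx then -1 else (0:R).
  have sa : @suppm R I idx a by move=> o oi; rewrite /a (negbTE oi).
  have := Hc a sa.
  have -> : \sum_(o <- idx) a o * c o = - \sum_(o <- idx) c o.
    rewrite -sumrN big_seq [RHS]big_seq; apply: eq_bigr => o oi.
    by rewrite /a oi mulN1r.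
  have h2 : (0:R) < 1 / 2 by [].
  have [tt tt0 Htt] := small _ h2.
  have Sa : Sset a (- (1 / 2)).
    exists tt, x0; split => // o oi; have := Htt o oi.
    rewrite /a oi; lra.
  have := pS_le Sa; lra.
- move=> x Dx.
  pose a := fun o => if o \in idx then - k x o else (0:R).
  have sa : @suppm R I idx a by move=> o oi; rewrite /a (negbTE oi).
  have := Hc a sa.
  have -> : \sum_(o <- idx) a o * c o = - \sum_(o <- idx) c o * k x o.
    rewrite -sumrN big_seq [RHS]big_seq; apply: eq_bigr => o oi.
    by rewrite /a oi mulNr mulrC.
  have Sa : Sset a 0.
    by exists 1, x; split => // o oi; rewrite /a oi mul1r sub0r opprK.
  have := pS_le Sa; lra.
Qed.
End Sep.

Local Open Scope ereal_scope.

Section Main.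
Variables (R : realType) (X : lmodType R) (T : choiceType)
  (f : X -> \bar R) (ft : T -> X -> \bar R).

Lemma MdomP x : Mdom ft x <-> forall t, ft t x < +oo.
Proof.
rewrite /Mdom; split; first by move=> h t; exact: (h t I).
by move=> h t _; exact: h.
Qed.

Lemma finE {g : X -> \bar R} {x} : eproper g -> g x < +oo -> g x = (fine (g x))%:E.
Proof.
move=> [gN _] gx; rewrite fineK // fin_numE gN /= (lt_eqF gx) //=.
Qed.

Lemma conv_comb {g : X -> \bar R} {x1 x2} {th : R} : econvex g -> eproper g ->
  g x1 < +oo -> g x2 < +oo -> (0 < th)%R -> (th < 1)%R ->
  g (th *: x1 + (1 - th) *: x2)%R < +oo /\
  (fine (g (th *: x1 + (1 - th) *: x2)%R) <= th * fine (g x1) + (1 - th) * fine (g x2))%R.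
Proof.
move=> gc gp g1 g2 th0 th1.
have := gc x1 x2 th th0 th1.
rewrite (finE gp g1) (finE gp g2) -!EFinM -EFinD => h.
have hlt : g (th *: x1 + (1 - th) *: x2)%R < +oo by apply: le_lt_trans h _; exact: ltry.
split => //.
by move: h; rewrite (finE gp hlt) lee_fin.
Qed.

Lemma sum_conv (l : T -> R) (hs : seq T) x : uniq hs ->
  (forall t, l t != 0%R -> t \in hs) -> (forall t, eproper (ft t)) -> Mdom ft x ->
  \sum_(t \in [set t | l t != 0%R]) (l t)%:E * ft t x =
  (\sum_(t <- hs) l t * fine (ft t x))%:E.
Proof.
move=> uhs hl gp /MdomP Mx.
rewrite (fsbig_fwiden hs) //.
- rewrite -sumEFin; apply: eq_bigr => t _.
  by rewrite {1}(finE (gp t) (Mx t)).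
- move=> t /= [_]; rewrite /= => /negP; rewrite negbK => /eqP ->.
  by rewrite mul0e.
Qed.


Lemma sep_apply (fc : econvex f) (fp : eproper f) (gc : forall t, econvex (ft t))
  (gp : forall t, eproper (ft t)) (hs : seq T) (eps r : R) x0 :
  uniq hs -> Mdom ft x0 -> f x0 < +oo ->
  (forall x, Mdom ft x -> f x < +oo -> (forall t, t \in hs -> ft t x <= eps%:E) -> r%:E < f x) ->
  exists (cN : R) (ct : T -> R),
   [/\ (0 <= cN)%R, forall t, t \in hs -> (0 <= ct t)%R, (0 < cN + \sum_(t <- hs) ct t)%R &
    forall x, Mdom ft x -> f x < +oo ->
     (0 <= cN * (fine (f x) - r) + \sum_(t <- hs) ct t * (fine (ft t x) - eps))%R].
Proof.
move=> uhs Mx0 fx0 Hinf.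
pose D := [set x | Mdom ft x /\ f x < +oo].
pose k := fun x (o : option T) => match o with None => (fine (f x) - r)%R
  | Some t => (fine (ft t x) - eps)%R end.
pose idx := None :: map Some hs.
have uidx : uniq idx.
  have injS : injective (@Some T) by move=> a b [].
  rewrite /idx cons_uniq (map_inj_uniq injS) uhs andbT; apply/negP; by case/mapP.
have Dconv : forall x1 x2, D x1 -> D x2 -> forall th : R, (0 < th)%R -> (th < 1)%R ->
    exists x, D x /\ forall o, o \in idx -> (k x o <= th * k x1 o + (1 - th) * k x2 o)%R.
  move=> x1 x2 [M1 f1] [M2 f2] th th0 th1.
  have [fl fle] := conv_comb fc fp f1 f2 th0 th1.
  move/MdomP: M1 => M1; move/MdomP: M2 => M2.
  exists (th *: x1 + (1 - th) *: x2)%R; split.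
    split => //; apply/MdomP => t.
    by have [] := conv_comb (gc t) (gp t) (M1 t) (M2 t) th0 th1.
  move=> [t|] _ /=.
    have [_ h] := conv_comb (gc t) (gp t) (M1 t) (M2 t) th0 th1.
    lra.
  lra.
have Dx0 : D x0 by [].
have Dinf : forall x, D x -> exists2 o, o \in idx & (0 < k x o)%R.
  move=> x [Mx fx].
  case: (ltrP r (fine (f x))) => hr.
    by exists None; rewrite ?inE ?eqxx //= subr_gt0.
  case: (pselect (exists2 t, t \in hs & (eps < fine (ft t x))%R)) => [[t th et]|nt].
    exists (Some t); first by rewrite /idx inE /= mem_map //; move=> a b [].
    by rewrite /= subr_gt0.
  exfalso.
  have : r%:E < f x.
    apply: Hinf => // t th; move/MdomP: Mx => Mx.
    rewrite (finE (gp t) (Mx t)) lee_fin leNgt; apply/negP => h; apply: nt.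
    by exists t.
  by rewrite (finE fp fx) lte_fin ltNge hr.
have := @separation R _ X D k idx uidx Dconv x0 Dx0 Dinf. case=> c [c0 csum cx].
exists (c None), (fun t => c (Some t)); split.
- by apply: c0; rewrite inE eqxx.
- by move=> t th; apply: c0; rewrite /idx inE /= mem_map //; move=> a b [].
- by move: csum; rewrite /idx big_cons big_map.
- move=> x Mx fx; have := cx x (conj Mx fx).
  by rewrite /idx big_cons big_map.
Qed.

Lemma Dl_lb (fp : eproper f) (gp : forall t, eproper (ft t)) (l : T -> R) (hs : seq T) (r : R) :
  uniq hs -> (forall t, l t != 0%R -> t \in hs) ->
  (forall x, Mdom ft x -> f x < +oo ->
     (r <= fine (f x) + \sum_(t <- hs) l t * fine (ft t x))%R) ->
  r%:E <= ereal_inf [set f x + \sum_(t \in [set t | l t != 0%R]) (l t)%:E * ft t x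
                     | x in Mdom ft].
Proof.
move=> uhs hl H; apply/ereal_infP => _ [x Mx <-].
rewrite (sum_conv l hs x uhs hl gp Mx).
case: (eqVneq (f x) +oo) => [->|fx]; first by rewrite addye // leey.
have fx' : f x < +oo by rewrite ltey.
by rewrite (finE fp fx') -EFinD lee_fin; apply: H.
Qed.

End Main.
Arguments finE {R X g x}.
Arguments conv_comb {R X g x1 x2 th}.
Arguments sum_conv {R X T ft}.
Arguments MdomP {R X T ft x}.
Arguments sep_apply {R X T f ft}.
Arguments Dl_lb {R X T f ft}.

Lemma lt_dense {R : realType} {a b : \bar R} : a < b -> exists r : R, a < r%:E < b.
Proof.
case: a => [a| |]; case: b => [b| |] //=.
- move=> ab; exists ((a + b) / 2)%R; rewrite !lte_fin; apply/andP; split.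
    rewrite lte_fin in ab; lra.
  rewrite lte_fin in ab; lra.
- by move=> _; exists (a + 1)%R; rewrite lte_fin ltry andbT; lra.
- by move=> _; exists (b - 1)%R; rewrite lte_fin ltNyr /=; lra.
- by move=> _; exists 0%R; rewrite ltry ltNyr.
Qed.

Lemma enum_fin {T : choiceType} {A : set T} : finite_set A ->
  exists hs : seq T, uniq hs /\ forall t, A t <-> t \in hs.
Proof.
move=> finA; exists (fset_set A : seq T); split; first exact: fset_uniq.
by move=> t; rewrite in_fset_set // in_setE.
Qed.

Lemma nbhs_box (R : realType) (T : choiceType) (hs : seq T) (e : R) : (0 < e)%R ->
  nbhs ((fun _ : T => 0%R) : {ptws T -> R}) [set y | forall t, t \in hs -> (`|y t| < e)%R].
Proof.
move=> e0.
elim: hs => [|t hs IH].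
  have -> : [set y : {ptws T -> R} | forall t, t \in [::] -> (`|y t| < e)%R] = setT.
    by apply/seteqP; split => y // _ t.
  exact: filterT.
have h1 : nbhs ((fun _ : T => 0%R) : {ptws T -> R}) [set y : {ptws T -> R} | (`|y t| < e)%R].
  have cv := @proj_continuous T (fun _ => R) t (fun _ => 0%R).
  have hA : nbhs (0%R : R) [set r : R | (`|r| < e)%R].
    apply/nbhs_ballP; exists e => //= r; rewrite /ball /= sub0r normrN.
    by [].
  exact: (cv _ hA).
apply: filterS (filterI h1 IH) => y [yt yh] s; rewrite inE => /orP[/eqP ->//|]; exact: yh.
Qed.

Theorem proposition2p1 (R : realType) (X : lmodType R) (T : choiceType)
  (f : X -> \bar R) (ft : T -> X -> \bar R) :
  infinite_set [set: T] ->
  econvex f -> eproper f ->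
  (forall t, econvex (ft t)) -> (forall t, eproper (ft t)) ->
  (vbar0 f ft != +oo \/ supD f ft != -oo) ->
  supD f ft = supFinPert f ft.
Proof.
move=> Tinf fc fp gc gp hyp.
have [t0 _] : exists t0 : T, True.
  apply: contrapT => h; apply: Tinf.
  have -> : [set: T] = set0.
    by apply/seteqP; split => // t _; apply: h; exists t.
  exact: finite_set0.
apply/eqP; rewrite eq_le; apply/andP; split.
- apply: ge_ereal_sup => _ [l [lfin lpos] <-].
  have [hs0 [u0 hs0P]] := enum_fin lfin.
  set Lam := (\sum_(t <- hs0) l t)%R.
  have Lam0 : (0 <= Lam)%R by rewrite sumr_ge0.
  apply/lee_addgt0Pr => d d0.
  set eps := (d / (Lam + 1))%R.
  have eps0 : (0 < eps)%R by rewrite divr_gt0 // ltr_pwDr.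
  set H := [set t | l t != 0%R] `|` [set t0].
  set P := ereal_inf [set f x | x in [set x | Mdom ft x /\
                                     (forall t, H t -> ft t x <= eps%:E)]].
  have Pq : P <= supFinPert f ft.
    apply: le_ereal_sup_tmp; exists P => //; exists eps, H; split => //.
      by rewrite /H finite_setU; split => //; exact: finite_set1.
    by exists t0; right.
  apply: le_trans (leeD2r _ Pq).
  rewrite -leeBlDr //; apply/ereal_infP => _ [x [Mx Hx] <-].
  rewrite leeBlDr //.
  apply: le_trans (leeD2l (f x) (_ : _ <= d%:E)).
    apply: ge_ereal_inf; eexists; first by exists x.
    exact: le_refl.
  rewrite (sum_conv l hs0 x u0 _ gp Mx); last by move=> t /hs0P.
  rewrite lee_fin.
  apply: (@le_trans _ _ (\sum_(t <- hs0) l t * eps)%R).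
    rewrite big_seq [X in (_ <= X)%R]big_seq; apply: ler_sum => t th.
    apply: ler_wpM2l; first exact: lpos.
    move/MdomP: Mx => Mx.
    have := Hx t (or_introl ((hs0P t).2 th)).
    by rewrite (finE (gp t) (Mx t)) lee_fin.
  rewrite -mulr_suml -/Lam /eps mulrA ler_pdivrMr ?ltr_pwDr //.
  nra.
- apply: ge_ereal_sup => _ [eps [H [eps0 Hfin H0 ->]]].
  set P := ereal_inf _.
  set s := supD f ft.
  rewrite leNgt; apply/negP => sP.
  have Ds : forall l, fin_supp_nonneg l ->
      ereal_inf [set f x + \sum_(t \in [set t | l t != 0%R]) (l t)%:E * ft t x
                 | x in Mdom ft] <= s.
    by move=> l hl; apply: le_ereal_sup_tmp; eexists; first by exists l.
  have [l0 [[l0fin l0pos] Hd]] : exists l0 : T -> R, fin_supp_nonneg l0 /\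
     (s != -oo -> exists d : R, d%:E <= ereal_inf [set f x +
        \sum_(t \in [set t | l0 t != 0%R]) (l0 t)%:E * ft t x | x in Mdom ft]).
    case: (eqVneq s -oo) => [sN|sN].
      exists (fun _ => 0%R); split; last by [].
      split => //; apply: (sub_finite_set _ (finite_set0 T)) => t /=.
      by rewrite eqxx.
    have : -oo < s by rewrite ltNye.
    case/ereal_sup_gt => _ [l hl <-] hlt.
    exists l; split => // _.
    move: hlt; set Dv := ereal_inf _ => hlt.
    case: Dv hlt => [d| |] //= _; first by exists d.
    by exists 0%R; rewrite leey.
  set H' := H `|` [set t | l0 t != 0%R].
  have H'fin : finite_set H' by rewrite /H' finite_setU.
  have [hs [uhs hsP]] := enum_fin H'fin.
  have [r /andP[sr rP]] := lt_dense sP.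
  have Hcon : forall l, fin_supp_nonneg l -> r%:E <= ereal_inf [set f x +
        \sum_(t \in [set t | l t != 0%R]) (l t)%:E * ft t x | x in Mdom ft] -> False.
    move=> l hl hr; have := le_trans hr (Ds l hl); rewrite leNgt sr //.
  have Hinf : forall x, Mdom ft x -> f x < +oo ->
      (forall t, t \in hs -> ft t x <= eps%:E) -> r%:E < f x.
    move=> x Mx fx hx; apply: lt_le_trans rP _; apply: ge_ereal_inf.
    exists (f x) => //; exists x => //; split => // t Ht; apply: hx; apply/hsP; by left.
  case: (pselect (exists x0, Mdom ft x0 /\ f x0 < +oo)) => [[x0 [Mx0 fx0]]|nx]; last first.
    apply: (Hcon (fun _ => 0%R)).
      split => //; apply: (sub_finite_set _ (finite_set0 T)) => t /=.
      by rewrite eqxx.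
    apply: (Dl_lb fp gp _ [::]) => //; first by move=> t; rewrite eqxx.
    by move=> x Mx fx; exfalso; apply: nx; exists x; split.
  have [cN [ct [cN0 ct0 cpos cx]]] := sep_apply fc fp gc gp hs eps r x0 uhs Mx0 fx0 Hinf.
  have Bsum : forall x, Mdom ft x -> (\sum_(t <- hs) ct t * (fine (ft t x) - eps) =
       \sum_(t <- hs) ct t * fine (ft t x) - eps * \sum_(t <- hs) ct t)%R.
    move=> x _; rewrite mulr_sumr -sumrB; apply: eq_bigr => t _; rewrite mulrBr; lra.
  have Bge0 : (0 <= \sum_(t <- hs) ct t)%R.
    by rewrite big_seq sumr_ge0 // => t /ct0.
  case: (ltrP 0 cN) => [cNp|cNle].
    pose lam := fun t => if t \in hs then (ct t / cN)%R else 0%R.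
    have lsupp : forall t, lam t != 0%R -> t \in hs.
      by move=> t; rewrite /lam; case: ifP => //; rewrite eqxx.
    apply: (Hcon lam).
      split.
        apply: (sub_finite_set _ (finite_seq hs)) => t /= /lsupp //.
      move=> t; rewrite /lam; case: ifP => // th.
      by rewrite divr_ge0 ?ct0 // ltW.
    apply: (Dl_lb fp gp lam hs r uhs lsupp) => x Mx fx.
    have eA : (\sum_(t <- hs) lam t * fine (ft t x) =
               (\sum_(t <- hs) ct t * fine (ft t x)) / cN)%R.
      rewrite mulr_suml big_seq [RHS]big_seq; apply: eq_bigr => t th.
      by rewrite /lam th mulrAC.
    rewrite eA.
    have := cx x Mx fx; rewrite Bsum // => h.
    have h2 : (0 <= cN * (fine (f x) - r + (\sum_(t <- hs) ct t * fine (ft t x)) / cN))%R.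
      rewrite mulrDr mulrCA mulfV ?gt_eqF // mulr1.
      have : (0 <= eps * \sum_(t <- hs) ct t)%R by rewrite mulr_ge0 // ltW.
      lra.
    rewrite pmulr_rge0 // in h2; lra.
  have cNz : cN = 0%R by apply/eqP; rewrite eq_le cNle cN0.
  rewrite cNz add0r in cpos.
  have cx0 : forall x, Mdom ft x -> f x < +oo ->
      (eps * \sum_(t <- hs) ct t <= \sum_(t <- hs) ct t * fine (ft t x))%R.
    move=> x Mx fx; have := cx x Mx fx; rewrite cNz mul0r add0r Bsum //; lra.
  have epsB : (0 < eps * \sum_(t <- hs) ct t)%R by rewrite mulr_gt0.
  case: (eqVneq s -oo) => [sN|sN].
    have hv : vbar0 f ft != +oo.
      by case: hyp => // h; move: h; rewrite -/s sN.
    move/negP: hv; apply; rewrite -leye_eq /vbar0; apply: le_ereal_sup_tmp.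
    have e2 : (0 < eps / 2)%R by rewrite divr_gt0.
    have nV := @nbhs_box R T hs (eps / 2) e2.
    set V := [set y : {ptws T -> R} | _] in nV.
    exists (ereal_inf (valfun f ft @` V)); first by exists V.
    apply/ereal_infP => _ [y Vy <-]; rewrite /valfun.
    apply/ereal_infP => _ [x hx <-].
    rewrite leye_eq; apply/negPn/negP => fx.
    have fx' : f x < +oo by rewrite ltey.
    have Mx : Mdom ft x by apply/MdomP => t; exact: le_lt_trans (hx t) (ltry _).
    have := cx0 x Mx fx'.
    have : (\sum_(t <- hs) ct t * fine (ft t x) <= \sum_(t <- hs) ct t * (eps / 2))%R.
      rewrite big_seq [X in (_ <= X)%R]big_seq; apply: ler_sum => t th.
      apply: ler_wpM2l; first exact: ct0.
      have := hx t; move/MdomP: Mx => Mx.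
      rewrite (finE (gp t) (Mx t)) lee_fin => h1.
      have := Vy t th; have := ler_norm (y t); lra.
    rewrite -mulr_suml; lra.
  have [d hd] := Hd sN.
  set B := (\sum_(t <- hs) ct t)%R in epsB cx0 cpos Bge0 Bsum.
  set kap := (`|r - d| / (eps * B))%R.
  have kap0 : (0 <= kap)%R by rewrite divr_ge0 // ltW.
  pose lam := fun t => (l0 t + kap * (if t \in hs then ct t else 0))%R.
  have l0supp : forall t, l0 t != 0%R -> t \in hs.
    by move=> t h; apply/hsP; right.
  have lsupp : forall t, lam t != 0%R -> t \in hs.
    move=> t; case: (boolP (t \in hs)) => // th.
    by rewrite /lam (negbTE th) mulr0 addr0 => /l0supp; rewrite (negbTE th).
  apply: (Hcon lam).
    split.
      by apply: (sub_finite_set _ (finite_seq hs)) => t /= /lsupp.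
    move=> t; rewrite /lam; apply: addr_ge0 => //; apply: mulr_ge0 => //.
    by case: ifP => // th; apply: ct0.
  apply: (Dl_lb fp gp lam hs r uhs lsupp) => x Mx fx.
  have e1 : (\sum_(t <- hs) lam t * fine (ft t x) =
     \sum_(t <- hs) l0 t * fine (ft t x) + kap * \sum_(t <- hs) ct t * fine (ft t x))%R.
    rewrite mulr_sumr -big_split big_seq [RHS]big_seq; apply: eq_bigr => t th /=.
    by rewrite /lam th mulrDl mulrA.
  rewrite e1.
  have hd' : (d <= fine (f x) + \sum_(t <- hs) l0 t * fine (ft t x))%R.
    rewrite -lee_fin; apply: (le_trans hd); apply: ge_ereal_inf.
    eexists; first by exists x.
    by rewrite (sum_conv l0 hs x uhs l0supp gp Mx) (finE fp fx) -EFinD.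
  have hA := cx0 x Mx fx.
  have hk : (kap * (eps * B) = `|r - d|)%R by rewrite /kap divfK // gt_eqF.
  have hk2 : (kap * (eps * B) <= kap * \sum_(t <- hs) ct t * fine (ft t x))%R.
    by rewrite ler_wpM2l.
  have := ler_norm (r - d); lra.
Qed.
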